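(* Let $a\in\mathbb{R}$ and $b>0$. The equation $g(x)+g(x+a)+g(x+b)=0$ ($x\in\mathbb{R}$) admits a continuous periodic solution $g:\mathbb{R}\to\mathbb{R}$ that is not identically zero if and only if $$\frac{a}{b}\in\left\{\frac{2+3k}{1+3m},\ \frac{1+3m}{2+3k}:\ (m,k)\in\mathbb{Z}^2\right\}.$$ In particular, if $a/b\notin\mathbb{Q}$ then the equation admits no nonzero continuous periodic solution, and there are infinitely many rational numbers $p/q$ such that $a/b=p/q$ implies the equation admits no nonzero continuous periodic solution. *)

(* Defs.v *)
From Stdlib Require Import Reals ZArith.
Open Scope R_scope.

Definition periodic (g : R -> R) : Prop :=
  exists T : R, 0 < T /\ forall x : R, g (x + T) = g x.

Definition has_nonzero_cont_periodic_sol (a b : R) : Prop :=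
  exists g : R -> R,
    continuity g /\ periodic g /\ (exists x0 : R, g x0 <> 0) /\
    forall x : R, g x + g (x + a) + g (x + b) = 0.

Definition in_exceptional_set (r : R) : Prop :=
  exists m k : Z,
    r = IZR (2 + 3 * k) / IZR (1 + 3 * m) \/
    r = IZR (1 + 3 * m) / IZR (2 + 3 * k).

Definition is_rational (r : R) : Prop :=
  exists p q : Z, (q <> 0)%Z /\ r = IZR p / IZR q.

(* Main.v *)
Require Import Defs.
From Stdlib Require Import Reals ZArith.
From Stdlib Require Import Reals Lra Lia Classical.
From Coquelicot Require Import Coquelicot.
Open Scope R_scope.

Lemma cont_conv (f : R -> R) x : continuity f -> continuous f x.
Proof. intros H; apply continuity_pt_filterlim; apply H. Qed.

Lemma exR (f : R -> R) a b : continuity f -> ex_RInt f a b.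
Proof. intros H; apply (ex_RInt_continuous (V:=R_CompleteNormedModule)); intros; apply cont_conv; auto. Qed.

Lemma Chas (f : R -> R) a b c : continuity f -> RInt f a b + RInt f b c = RInt f a c.
Proof. intros H. exact (RInt_Chasles f a b c (exR f a b H) (exR f b c H)). Qed.

Lemma lin2 (f g : R -> R) c1 c2 a b : continuity f -> continuity g ->
  RInt (fun x => c1 * f x + c2 * g x) a b = c1 * RInt f a b + c2 * RInt g a b.
Proof.
  intros Hf Hg.
  apply is_RInt_unique.
  apply (is_RInt_plus (V:=R_NormedModule) (fun x => c1 * f x) (fun x => c2 * g x)).
  - apply (is_RInt_scal (V:=R_NormedModule) f). apply (RInt_correct (V:=R_CompleteNormedModule)). apply exR; auto.
  - apply (is_RInt_scal (V:=R_NormedModule) g). apply (RInt_correct (V:=R_CompleteNormedModule)). apply exR; auto.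
Qed.

Lemma shift_int (f : R -> R) v a b : continuity f ->
  RInt (fun x => f (x + v)) a b = RInt f (a + v) (b + v).
Proof.
  intros H.
  assert (E := RInt_comp_lin f 1 v a b (exR f _ _ H)).
  replace (1 * a + v) with (a + v) in E by ring.
  replace (1 * b + v) with (b + v) in E by ring.
  rewrite <- E. apply RInt_ext; intros. unfold scal; simpl; unfold mult; simpl.
  f_equal. ring_simplify. f_equal. ring.
Qed.

Lemma RInt_period (F : R -> R) : continuity F -> (forall x, F (x + 2*PI) = F x) ->
  forall u, RInt F u (u + 2*PI) = RInt F 0 (2*PI).
Proof.
  intros HF HP u.
  rewrite <- (Chas F u (2*PI) (u + 2*PI) HF).
  replace (RInt F (2*PI) (u+2*PI)) with (RInt F 0 u).
  - rewrite Rplus_comm. apply Chas; auto.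
  - replace (2*PI) with (0 + 2*PI) at 1 by ring.
    rewrite <- shift_int by auto. apply RInt_ext. intros; rewrite HP; auto.
Qed.

Lemma RInt_ge_const (f : R -> R) a b c : a <= b -> continuity f ->
  (forall t, a <= t <= b -> c <= f t) -> c * (b - a) <= RInt f a b.
Proof.
  intros Hab Hf Hc.
  assert (E := RInt_const (V:=R_CompleteNormedModule) a b c). simpl in E. unfold scal in E; simpl in E; unfold mult in E; simpl in E.
  replace (c * (b - a)) with (RInt (fun _ => c) a b).
  2:{ rewrite E; apply Rmult_comm. }
  apply RInt_le; auto.
  - apply ex_RInt_const.
  - apply exR; auto.
  - intros; apply Hc; lra.
Qed.
Ltac rR := match goal with |- ?A = ?B => change (@eq R A B) end.

Lemma cmul (f g : R -> R) : continuity f -> continuity g -> continuity (fun x => f x * g x).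
Proof. intros Hf Hg; exact (continuity_mult f g Hf Hg). Qed.
Lemma cadd (f g : R -> R) : continuity f -> continuity g -> continuity (fun x => f x + g x).
Proof. intros Hf Hg; exact (continuity_plus f g Hf Hg). Qed.
Lemma cshift (h : R -> R) a : continuity h -> continuity (fun x => h (x + a)).
Proof. intros Hh. apply (continuity_comp (fun x => x + a) h); auto. reg. Qed.
Lemma ccos k c : continuity (fun y => cos (k*y + c)).
Proof. reg. Qed.
Lemma csin k c : continuity (fun y => sin (k*y + c)).
Proof. reg. Qed.
Lemma ccos0 k : continuity (fun y => cos (k*y)).
Proof. reg. Qed.
Lemma csin0 k : continuity (fun y => sin (k*y)).
Proof. reg. Qed.
Lemma cscal l (f : R -> R) : continuity f -> continuity (fun x => l * f x).
Proof. intros; apply cmul; auto. reg. Qed.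

Lemma cosZ x k : cos (x + 2 * IZR k * PI) = cos x.
Proof.
  rewrite cos_plus.
  assert (S1 : sin (2 * IZR k * PI) = 0).
  { apply sin_eq_0_1. exists (2*k)%Z. rewrite mult_IZR. ring. }
  assert (S2 : sin (IZR k * PI) = 0).
  { apply sin_eq_0_1. exists k. ring. }
  replace (2 * IZR k * PI) with (2 * (IZR k * PI)) by ring.
  rewrite cos_2a_sin, S2. replace (2 * (IZR k * PI)) with (2 * IZR k * PI) by ring.
  rewrite S1. ring.
Qed.

Lemma sinZ x k : sin (x + 2 * IZR k * PI) = sin x.
Proof.
  rewrite sin_plus.
  assert (S1 : sin (2 * IZR k * PI) = 0).
  { apply sin_eq_0_1. exists (2*k)%Z. rewrite mult_IZR. ring. }
  assert (S2 : sin (IZR k * PI) = 0).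
  { apply sin_eq_0_1. exists k. ring. }
  replace (2 * IZR k * PI) with (2 * (IZR k * PI)) by ring.
  rewrite cos_2a_sin, S2. replace (2 * (IZR k * PI)) with (2 * IZR k * PI) by ring.
  rewrite S1. ring.
Qed.

Definition Cf (h : R -> R) (n : Z) : R := RInt (fun x => h x * cos (IZR n * x)) 0 (2*PI).
Definition Sf (h : R -> R) (n : Z) : R := RInt (fun x => h x * sin (IZR n * x)) 0 (2*PI).

Lemma shiftC h a n : continuity h -> (forall x, h (x + 2*PI) = h x) ->
  RInt (fun x => h (x + a) * cos (IZR n * x)) 0 (2*PI)
  = cos (IZR n * a) * Cf h n + sin (IZR n * a) * Sf h n.
Proof.
  intros Hh HP.
  set (F := fun y => h y * cos (IZR n * y + - (IZR n * a))).
  assert (HF : continuity F) by (apply cmul; auto; apply ccos).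
  transitivity (RInt (fun x => F (x + a)) 0 (2*PI)).
  { apply RInt_ext; intros; rR; unfold F. f_equal. f_equal. ring. }
  rewrite shift_int by auto.
  replace (2*PI + a) with ((0 + a) + 2*PI) by ring.
  rewrite RInt_period; auto.
  2:{ intros x; unfold F. rewrite HP. f_equal.
      replace (IZR n * (x + 2 * PI) + - (IZR n * a)) with
        ((IZR n * x + - (IZR n * a)) + 2 * IZR n * PI) by ring.
      apply cosZ. }
  unfold Cf, Sf.
  rewrite <- lin2.
  - apply RInt_ext; intros; rR; unfold F.
    replace (IZR n * x + - (IZR n * a)) with (IZR n * x - IZR n * a) by ring.
    rewrite cos_minus. ring.
  - apply cmul; auto. apply ccos0.
  - apply cmul; auto. apply csin0.
Qed.

Lemma shiftS h a n : continuity h -> (forall x, h (x + 2*PI) = h x) ->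
  RInt (fun x => h (x + a) * sin (IZR n * x)) 0 (2*PI)
  = cos (IZR n * a) * Sf h n + - sin (IZR n * a) * Cf h n.
Proof.
  intros Hh HP.
  set (F := fun y => h y * sin (IZR n * y + - (IZR n * a))).
  assert (HF : continuity F) by (apply cmul; auto; apply csin).
  transitivity (RInt (fun x => F (x + a)) 0 (2*PI)).
  { apply RInt_ext; intros; rR; unfold F. f_equal. f_equal. ring. }
  rewrite shift_int by auto.
  replace (2*PI + a) with ((0 + a) + 2*PI) by ring.
  rewrite RInt_period; auto.
  2:{ intros x; unfold F. rewrite HP. f_equal.
      replace (IZR n * (x + 2 * PI) + - (IZR n * a)) with
        ((IZR n * x + - (IZR n * a)) + 2 * IZR n * PI) by ring.
      apply sinZ. }
  unfold Cf, Sf.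
  rewrite <- lin2.
  - apply RInt_ext; intros; rR; unfold F.
    replace (IZR n * x + - (IZR n * a)) with (IZR n * x - IZR n * a) by ring.
    rewrite sin_minus. ring.
  - apply cmul; auto. apply csin0.
  - apply cmul; auto. apply ccos0.
Qed.

Inductive TP : (R -> R) -> Prop :=
| TPc (k : Z) (c : R) : TP (fun y => cos (IZR k * y + c))
| TPadd f g : TP f -> TP g -> TP (fun y => f y + g y)
| TPsc l f : TP f -> TP (fun y => l * f y)
| TPext (f g : R -> R) : (forall y, f y = g y) -> TP f -> TP g.

Lemma TP_cont f : TP f -> continuity f.
Proof.
  induction 1.
  - apply ccos.
  - apply cadd; auto.
  - apply cscal; auto.
  - intros x. apply (continuity_pt_ext f g); auto.
Qed.

Lemma TP_int h f : continuity h ->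
  (forall n, Cf h n = 0 /\ Sf h n = 0) -> TP f ->
  RInt (fun y => h y * f y) 0 (2*PI) = 0.
Proof.
  intros Hh HF. induction 1.
  - destruct (HF k) as [H1 H2]. unfold Cf, Sf in *.
    transitivity (RInt (fun y => cos c * (h y * cos (IZR k * y)) + - sin c * (h y * sin (IZR k * y))) 0 (2*PI)).
    + apply RInt_ext; intros; rR. rewrite cos_plus. ring.
    + rewrite lin2. rewrite H1, H2. change (@eq R (cos c * 0 + - sin c * 0) 0). ring.
      apply cmul; auto; apply ccos0. apply cmul; auto; apply csin0.
  - transitivity (RInt (fun y => 1 * (h y * f y) + 1 * (h y * g y)) 0 (2*PI)).
    + apply RInt_ext; intros; rR. ring.
    + rewrite lin2, IHTP1, IHTP2. change (@eq R (1 * 0 + 1 * 0) 0). ring.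
      apply cmul; auto; apply TP_cont; auto. apply cmul; auto; apply TP_cont; auto.
  - transitivity (RInt (fun y => l * (h y * f y) + 0 * (h y * f y)) 0 (2*PI)).
    + apply RInt_ext; intros; rR. ring.
    + rewrite lin2, IHTP. change (@eq R (l * 0 + 0 * 0) 0). ring.
      apply cmul; auto; apply TP_cont; auto. apply cmul; auto; apply TP_cont; auto.
  - transitivity (RInt (fun y => h y * f y) 0 (2*PI)); [|exact IHTP].
    apply RInt_ext; intros; rR. rewrite H; auto.
Qed.

Lemma prodcos a b : cos a * cos b = / 2 * cos (a + b) + / 2 * cos (a - b).
Proof. rewrite cos_plus, cos_minus. field. Qed.

Lemma TP_mul x0 f : TP f -> TP (fun y => f y * cos (y - x0)).
Proof.
  induction 1.
  - apply (TPext (fun y => / 2 * cos (IZR (k + 1) * y + (c - x0)) + / 2 * cos (IZR (k - 1) * y + (c + x0)))).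
    + intros y. cbv beta. rewrite plus_IZR, minus_IZR.
      replace ((IZR k + 1) * y + (c - x0)) with ((IZR k * y + c) + (y - x0)) by ring.
      replace ((IZR k - 1) * y + (c + x0)) with ((IZR k * y + c) - (y - x0)) by ring.
      symmetry; apply prodcos.
    + apply TPadd; apply TPsc; apply TPc.
  - apply (TPext (fun y => f y * cos (y - x0) + g y * cos (y - x0))).
    + intros; ring.
    + apply TPadd; auto.
  - apply (TPext (fun y => l * (f y * cos (y - x0)))).
    + intros; ring.
    + apply TPsc; auto.
  - apply (TPext (fun y => f y * cos (y - x0))); auto.
    intros; rewrite H; auto.
Qed.

Lemma TP_K x0 N : TP (fun y => (1 + cos (y - x0)) ^ N).
Proof.
  induction N.
  - apply (TPext (fun y => cos (IZR 0 * y + 0))). intros; simpl. replace (0*y+0) with 0 by ring. apply cos_0.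
    apply TPc.
  - apply (TPext (fun y => (1 + cos (y - x0)) ^ N + (1 + cos (y - x0)) ^ N * cos (y - x0))).
    + intros; simpl; ring.
    + apply TPadd; auto. apply TP_mul; auto.
Qed.

Lemma cont_near (f : R -> R) x eps : continuity_pt f x -> 0 < eps ->
  exists d, 0 < d /\ forall y, Rabs (y - x) < d -> Rabs (f y - f x) < eps.
Proof.
  intros H He. destruct (H eps He) as [d [Hd Hy]]. exists d; split; auto.
  intros y Hyd. destruct (Req_dec y x) as [->|Hne].
  - rewrite Rminus_diag, Rabs_R0; auto.
  - apply (Hy y). split; auto. split; auto. constructor.
Qed.

Lemma cos_abs t : cos (Rabs t) = cos t.
Proof. unfold Rabs; destruct (Rcase_abs t); [rewrite cos_neg|]; auto. Qed.

Lemma cos_le_out d t : 0 <= d -> d <= Rabs t <= PI -> cos t <= cos d.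
Proof.
  intros H1 [H2 H3]. rewrite <- (cos_abs t). pose proof (Rabs_pos t). apply cos_decr_1; lra.
Qed.

Lemma cos_ge_in e t : e <= PI -> Rabs t <= e -> cos e <= cos t.
Proof.
  intros H1 H2. rewrite <- (cos_abs t). pose proof (Rabs_pos t). apply cos_decr_1; lra.
Qed.

Lemma uniq_pos h x0 : continuity h -> (forall x, h (x + 2*PI) = h x) ->
  (forall n, Cf h n = 0 /\ Sf h n = 0) -> 0 < h x0 -> False.
Proof.
  intros Hh HP HF Hx0.
  set (H := fun t => h (t + x0)).
  assert (HH : continuity H) by (apply cshift; auto).
  assert (Hint : forall N, RInt (fun t => H t * (1 + cos t) ^ N) (-PI) PI = 0).
  { intros N.
    set (F := fun y => h y * (1 + cos (y - x0)) ^ N).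
    assert (HFc : continuity F) by (apply cmul; auto; apply TP_cont; apply TP_K).
    assert (E0 := TP_int h _ Hh HF (TP_K x0 N)). change (RInt F 0 (2*PI) = 0) in E0.
    rewrite <- (RInt_period F HFc) with (u := -PI + x0) in E0.
    2:{ intros x; unfold F; rewrite HP. f_equal. f_equal. f_equal.
        replace (x + 2 * PI - x0) with ((x - x0) + 2 * IZR 1 * PI) by (simpl; ring).
        apply cosZ. }
    replace (-PI + x0 + 2*PI) with (PI + x0) in E0 by ring.
    rewrite <- shift_int in E0 by auto.
    rewrite <- E0. apply RInt_ext; intros; rR. unfold F, H. replace (x + x0 - x0) with x by ring. reflexivity. }
  set (m := h x0 / 2).
  assert (Hm : 0 < m) by (unfold m; lra).
  destruct (cont_near H 0 m (HH 0) Hm) as [dl [Hdl Hnear]].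
  assert (HH0 : H 0 = h x0) by (unfold H; f_equal; ring).
  assert (PIpos := PI_RGT_0).
  set (d := Rmin (dl / 2) (PI / 2)).
  assert (Hd1 : 0 < d) by (unfold d; apply Rmin_glb_lt; lra).
  assert (Hd2 : d <= PI / 2) by (unfold d; apply Rmin_r).
  assert (Hd3 : d <= dl / 2) by (unfold d; apply Rmin_l).
  assert (Hlow : forall t, Rabs t <= d -> m <= H t).
  { intros t Ht. assert (A := Hnear t). rewrite Rminus_0_r, HH0 in A.
    assert (A2 : Rabs (H t - h x0) < m) by (apply A; lra).
    assert (A3 := Rabs_def2 _ _ A2). unfold m in *; lra. }
  destruct (continuity_ab_maj (fun t => Rabs (H t)) (-PI) PI) as [Mx [HM _]]; [lra| |].
  { intros c _. apply (continuity_comp H Rabs HH Rcontinuity_abs). }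
  set (M := Rabs (H Mx)).
  assert (HM0 : 0 <= M) by apply Rabs_pos.
  set (c1 := 1 + cos (d / 2)). set (c2 := 1 + cos d).
  assert (Hc2 : 1 <= c2) by (unfold c2; pose proof (cos_ge_0 d); lra).
  assert (Hc12 : c2 < c1) by (unfold c1, c2; pose proof (cos_decreasing_1 (d/2) d); lra).
  set (r := c1 / c2).
  assert (Hr : 1 < r) by (unfold r; apply (Rmult_lt_reg_r c2); [lra|]; field_simplify; lra).
  destruct (INR_archimed ((r - 1) * (d * m)) (2 * PI * M)) as [N HN].
  { apply Rmult_gt_0_compat; [lra|]. apply Rmult_gt_0_compat; lra. }
  set (G := fun t => H t * (1 + cos t) ^ N).
  assert (HG : continuity G) by (apply cmul; auto; reg).
  assert (Kpos : forall t, 0 <= (1 + cos t) ^ N) by (intros; apply pow_le; pose proof (COS_bound t); lra).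
  assert (Out : forall t, d <= Rabs t <= PI -> - (M * c2 ^ N) <= G t).
  { intros t Ht. unfold G.
    assert (K1 : (1 + cos t) ^ N <= c2 ^ N).
    { apply pow_incr. pose proof (COS_bound t). pose proof (cos_le_out d t). unfold c2; lra. }
    assert (Ha : Rabs (H t) <= M).
    { apply HM. split; [|apply Rle_trans with (Rabs t); [apply Rle_abs|lra]].
      assert (- t <= Rabs t) by (rewrite <- Rabs_Ropp; apply Rle_abs). lra. }
    assert (- M <= H t) by (assert (- H t <= Rabs (H t)) by (rewrite <- Rabs_Ropp; apply Rle_abs); lra).
    specialize (Kpos t).
    assert (0 <= (H t + M) * (1 + cos t) ^ N) by (apply Rmult_le_pos; lra).
    assert (0 <= M * (c2 ^ N - (1 + cos t) ^ N)) by (apply Rmult_le_pos; lra).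
    nra. }
  assert (Mid : forall t, Rabs t <= d -> 0 <= G t).
  { intros t Ht. unfold G. apply Rmult_le_pos; auto. specialize (Hlow t Ht); lra. }
  assert (In : forall t, Rabs t <= d / 2 -> m * c1 ^ N <= G t).
  { intros t Ht. unfold G.
    assert (K1 : c1 ^ N <= (1 + cos t) ^ N).
    { apply pow_incr. pose proof (cos_ge_in (d/2) t). pose proof (cos_ge_0 (d/2)). unfold c1; lra. }
    assert (L := Hlow t ltac:(lra)).
    assert (0 <= c1 ^ N) by (apply pow_le; lra).
    apply Rmult_le_compat; lra. }
  assert (Hab : forall t a b, a <= t <= b -> b <= 0 -> Rabs t = - t) by
    (intros; unfold Rabs; destruct Rcase_abs; lra).
  assert (Hab' : forall t a b, a <= t <= b -> 0 <= a -> Rabs t = t) by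
    (intros; unfold Rabs; destruct Rcase_abs; lra).
  assert (I1 : - (M * c2 ^ N) * (- d - - PI) <= RInt G (-PI) (-d)).
  { apply RInt_ge_const; auto; try lra. intros t Ht. apply Out. rewrite (Hab t (-PI) (-d)); lra. }
  assert (I2 : 0 * (- (d/2) - - d) <= RInt G (-d) (-(d/2))).
  { apply RInt_ge_const; auto; try lra. intros t Ht. apply Mid. rewrite (Hab t (-d) (-(d/2))); lra. }
  assert (I3 : m * c1 ^ N * (d/2 - - (d/2)) <= RInt G (-(d/2)) (d/2)).
  { apply RInt_ge_const; auto; try lra. intros t Ht. apply In. unfold Rabs; destruct Rcase_abs; lra. }
  assert (I4 : 0 * (d - d/2) <= RInt G (d/2) d).
  { apply RInt_ge_const; auto; try lra. intros t Ht. apply Mid. rewrite (Hab' t (d/2) d); lra. }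
  assert (I5 : - (M * c2 ^ N) * (PI - d) <= RInt G d PI).
  { apply RInt_ge_const; auto; try lra. intros t Ht. apply Out. rewrite (Hab' t d PI); lra. }
  assert (Sum : RInt G (-PI) (-d) + RInt G (-d) (-(d/2)) + RInt G (-(d/2)) (d/2)
               + RInt G (d/2) d + RInt G d PI = 0).
  { rewrite (Chas G (-PI) (-d) (-(d/2)) HG), (Chas G (-PI) (-(d/2)) (d/2) HG),
      (Chas G (-PI) (d/2) d HG), (Chas G (-PI) d PI HG). apply (Hint N). }
  assert (Hc1N : c1 ^ N = r ^ N * c2 ^ N).
  { rewrite <- Rpow_mult_distr. f_equal. unfold r; field. lra. }
  assert (Hpl := Rle_pow_lin (r - 1) N ltac:(lra)). replace (1 + (r - 1)) with r in Hpl by ring.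
  assert (Hc2N : 0 < c2 ^ N) by (apply pow_lt; lra).
  assert (Q1 : 2 * PI * M < d * m * r ^ N).
  { assert (d * m * (1 + INR N * (r - 1)) <= d * m * r ^ N) by (apply Rmult_le_compat_l; nra).
    assert (0 <= d * m) by nra. nra. }
  assert (Q2 : 2 * PI * M * c2 ^ N < d * m * c1 ^ N).
  { rewrite Hc1N. replace (d * m * (r ^ N * c2 ^ N)) with ((d * m * r ^ N) * c2 ^ N) by ring.
    apply Rmult_lt_compat_r; auto. }
  assert (0 <= M * c2 ^ N) by nra.
  nra.
Qed.

Lemma fourier_uniq h : continuity h -> (forall x, h (x + 2*PI) = h x) ->
  (forall n, Cf h n = 0 /\ Sf h n = 0) -> forall x, h x = 0.
Proof.
  intros Hh HP HF x. destruct (Rtotal_order (h x) 0) as [Hl|[He|Hg]]; auto.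
  - exfalso. apply (uniq_pos (fun y => - h y) x).
    + intros y; apply continuity_pt_opp; apply Hh.
    + intros y; rewrite HP; auto.
    + intros n; destruct (HF n) as [H1 H2]; unfold Cf, Sf in *; split.
      * transitivity (RInt (fun y => -1 * (h y * cos (IZR n * y)) + 0 * (h y * cos (IZR n * y))) 0 (2*PI)).
        { apply RInt_ext; intros; rR; ring. }
        rewrite lin2, H1. change (@eq R (-1 * 0 + 0 * 0) 0); ring.
        apply cmul; auto; apply ccos0. apply cmul; auto; apply ccos0.
      * transitivity (RInt (fun y => -1 * (h y * sin (IZR n * y)) + 0 * (h y * sin (IZR n * y))) 0 (2*PI)).
        { apply RInt_ext; intros; rR; ring. }
        rewrite lin2, H2. change (@eq R (-1 * 0 + 0 * 0) 0); ring.
        apply cmul; auto; apply csin0. apply cmul; auto; apply csin0.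
    + lra.
  - exfalso. apply (uniq_pos h x); auto.
Qed.

Lemma lin3 (f1 f2 f3 : R -> R) a b : continuity f1 -> continuity f2 -> continuity f3 ->
  RInt (fun x => f1 x + f2 x + f3 x) a b = RInt f1 a b + RInt f2 a b + RInt f3 a b.
Proof.
  intros H1 H2 H3.
  transitivity (RInt (fun x => 1 * (f1 x + f2 x) + 1 * f3 x) a b).
  { apply RInt_ext; intros; rR; ring. }
  rewrite lin2 by (try apply cadd; auto).
  transitivity (1 * RInt (fun x => 1 * f1 x + 1 * f2 x) a b + 1 * RInt f3 a b).
  { f_equal. f_equal. apply RInt_ext; intros; rR; ring. }
  rewrite lin2 by auto. rR. ring.
Qed.

Lemma cos1 x : cos x = 1 -> exists k, x = 2 * IZR k * PI.
Proof.
  intros H. replace x with (2 * (x / 2)) in H by field. rewrite cos_2a_sin in H.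
  assert (sin (x/2) * sin (x/2) = 0) by lra.
  assert (S : sin (x/2) = 0) by (destruct (Rmult_integral _ _ H0); auto).
  destruct (sin_eq_0_0 _ S) as [k Hk]. exists k. lra.
Qed.

Lemma trig3 u v : cos u + cos v = -1 -> sin u + sin v = 0 ->
  (exists j l, u = 2*(PI/3) + 2*IZR j*PI /\ v = -(2*(PI/3)) + 2*IZR l*PI) \/
  (exists j l, u = -(2*(PI/3)) + 2*IZR j*PI /\ v = 2*(PI/3) + 2*IZR l*PI).
Proof.
  intros Hc Hs.
  set (s := sqrt 3 / 2).
  assert (Hs2 : s * s = 3/4) by (unfold s; replace (sqrt 3 / 2 * (sqrt 3 / 2)) with (sqrt 3 * sqrt 3 / 4) by field; rewrite sqrt_sqrt; lra).
  assert (Hsin : sin (2*(PI/3)) = s) by (rewrite sin_2a, sin_PI3, cos_PI3; unfold s; field).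
  assert (Hcos := cos_2PI3).
  assert (Pu := sin2_cos2 u). assert (Pv := sin2_cos2 v). unfold Rsqr in *.
  assert (Hv1 : sin v = - sin u) by lra. assert (Hv2 : cos v = -1 - cos u) by lra.
  rewrite Hv1, Hv2 in Pv.
  assert (Cu : cos u = -1/2) by nra.
  assert (Su : (sin u - s) * (sin u + s) = 0) by nra.
  destruct (Rmult_integral _ _ Su) as [S1|S1].
  - left.
    destruct (cos1 (u - 2*(PI/3))) as [j Hj].
    { rewrite cos_minus, Hcos, Hsin. replace (sin u) with s by lra. rewrite Cu. lra. }
    destruct (cos1 (v + 2*(PI/3))) as [l Hl].
    { rewrite cos_plus, Hcos, Hsin, Hv1, Hv2. replace (sin u) with s by lra. rewrite Cu. lra. }
    exists j, l; lra.
  - right.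
    destruct (cos1 (u + 2*(PI/3))) as [j Hj].
    { rewrite cos_plus, Hcos, Hsin. replace (sin u) with (-s) by lra. rewrite Cu. lra. }
    destruct (cos1 (v - 2*(PI/3))) as [l Hl].
    { rewrite cos_minus, Hcos, Hsin, Hv1, Hv2. replace (sin u) with (-s) by lra. rewrite Cu. lra. }
    exists j, l; lra.
Qed.

Lemma cos3 t m k : cos t + cos (t + 2*PI*IZR(1+3*m)/3) + cos (t + 2*PI*IZR(2+3*k)/3) = 0.
Proof.
  replace (t + 2*PI*IZR(1+3*m)/3) with ((t + 2*(PI/3)) + 2*IZR m*PI)
    by (rewrite plus_IZR, mult_IZR; field).
  replace (t + 2*PI*IZR(2+3*k)/3) with ((t - 2*(PI/3)) + 2*IZR (k+1)*PI)
    by (rewrite !plus_IZR, mult_IZR; field).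
  rewrite !cosZ, cos_plus, cos_minus, cos_2PI3. lra.
Qed.

Lemma mk_sol a b p q : 0 < b -> IZR p <> 0 -> a = b * IZR q / IZR p ->
  (forall t, cos t + cos (t + 2*PI*IZR q/3) + cos (t + 2*PI*IZR p/3) = 0) ->
  has_nonzero_cont_periodic_sol a b.
Proof.
  intros Hb Hp Ha Hc.
  set (w := 2*PI*IZR p/(3*b)).
  exists (fun x => cos (w * x)). split; [reg|]. split; [|split].
  - exists (3*b). split; [lra|]. intros x.
    replace (w * (x + 3*b)) with (w * x + 2 * IZR p * PI) by (unfold w; field; lra).
    apply cosZ.
  - exists 0. rewrite Rmult_0_r, cos_0. lra.
  - intros x. pose proof PI_RGT_0.
    replace (w * (x + a)) with (w * x + 2*PI*IZR q/3) by (unfold w; rewrite Ha; field; lra).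
    replace (w * (x + b)) with (w * x + 2*PI*IZR p/3) by (unfold w; field; lra).
    apply Hc.
Qed.

Lemma only_if a b : 0 < b -> has_nonzero_cont_periodic_sol a b -> in_exceptional_set (a / b).
Proof.
  intros Hb [g [Hg [[T [HT HgT]] [[x0 Hx0] Heq]]]].
  pose proof PI_RGT_0 as Hpi.
  set (h := fun x => g (T / (2*PI) * x)).
  assert (Hh : continuity h).
  { apply (continuity_comp (fun x => T / (2*PI) * x) g); auto. reg. }
  assert (HP : forall x, h (x + 2*PI) = h x).
  { intros x; unfold h. replace (T / (2*PI) * (x + 2*PI)) with (T / (2*PI) * x + T) by (field; lra).
    apply HgT. }
  set (al := 2*PI*a/T). set (be := 2*PI*b/T).
  assert (Heqh : forall x, h x + h (x + al) + h (x + be) = 0).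
  { intros x; unfold h, al, be.
    replace (T / (2*PI) * (x + 2*PI*a/T)) with (T / (2*PI) * x + a) by (field; lra).
    replace (T / (2*PI) * (x + 2*PI*b/T)) with (T / (2*PI) * x + b) by (field; lra).
    apply Heq. }
  destruct (classic (exists n, Cf h n <> 0 \/ Sf h n <> 0)) as [[n Hn]|Hno].
  2:{ exfalso. apply Hx0.
      assert (Hz : forall n, Cf h n = 0 /\ Sf h n = 0).
      { intros n; split; apply NNPP; intro; apply Hno; eauto. }
      assert (E := fourier_uniq h Hh HP Hz (2*PI*x0/T)). unfold h in E.
      replace (T / (2*PI) * (2*PI*x0/T)) with x0 in E by (field; lra). exact E. }
  set (C := Cf h n). set (S := Sf h n).
  set (u := IZR n * al). set (v := IZR n * be).
  assert (Z0 : forall f1 : R -> R, continuity f1 -> RInt (fun x => 0 * f1 x + 0 * f1 x) 0 (2*PI) = 0).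
  { intros f1 Hf1. rewrite lin2 by auto. rR. ring. }
  assert (E1 : C + (cos u * C + sin u * S) + (cos v * C + sin v * S) = 0).
  { unfold C, S, u, v. rewrite <- shiftC, <- shiftC by auto. unfold Cf.
    rewrite <- lin3.
    - transitivity (RInt (fun x => 0 * (h x * cos (IZR n * x)) + 0 * (h x * cos (IZR n * x))) 0 (2*PI)).
      + apply RInt_ext; intros; rR. cbv beta.
        transitivity ((h x + h (x + al) + h (x + be)) * cos (IZR n * x)); [ring|rewrite Heqh; ring].
      + apply Z0. apply cmul; auto; apply ccos0.
    - apply cmul; auto; apply ccos0.
    - apply cmul; [apply cshift; auto|apply ccos0].
    - apply cmul; [apply cshift; auto|apply ccos0]. }
  assert (E2 : S + (cos u * S + - sin u * C) + (cos v * S + - sin v * C) = 0).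
  { unfold C, S, u, v. rewrite <- shiftS, <- shiftS by auto. unfold Sf.
    rewrite <- lin3.
    - transitivity (RInt (fun x => 0 * (h x * sin (IZR n * x)) + 0 * (h x * sin (IZR n * x))) 0 (2*PI)).
      + apply RInt_ext; intros; rR. cbv beta.
        transitivity ((h x + h (x + al) + h (x + be)) * sin (IZR n * x)); [ring|rewrite Heqh; ring].
      + apply Z0. apply cmul; auto; apply csin0.
    - apply cmul; auto; apply csin0.
    - apply cmul; [apply cshift; auto|apply csin0].
    - apply cmul; [apply cshift; auto|apply csin0]. }
  set (P := 1 + cos u + cos v). set (Q := sin u + sin v).
  assert (CS : 0 < C * C + S * S).
  { destruct Hn as [Hn|Hn].
    - assert (0 < C * C) by (apply Rsqr_pos_lt; auto). nra.
    - assert (0 < S * S) by (apply Rsqr_pos_lt; auto). nra. }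
  assert (EP : (C * C + S * S) * P = 0).
  { transitivity (C * (C + (cos u * C + sin u * S) + (cos v * C + sin v * S))
       + S * (S + (cos u * S + - sin u * C) + (cos v * S + - sin v * C))).
    - unfold P; ring.
    - rewrite E1, E2; ring. }
  assert (EQ : (C * C + S * S) * Q = 0).
  { transitivity (S * (C + (cos u * C + sin u * S) + (cos v * C + sin v * S))
       - C * (S + (cos u * S + - sin u * C) + (cos v * S + - sin v * C))).
    - unfold Q; ring.
    - rewrite E1, E2; ring. }
  assert (P0 : P = 0) by (destruct (Rmult_integral _ _ EP); auto; lra).
  assert (Q0 : Q = 0) by (destruct (Rmult_integral _ _ EQ); auto; lra).
  assert (Hn0 : IZR n <> 0).
  { intros Hn0. unfold P, u, v in P0. rewrite Hn0, !Rmult_0_l, cos_0 in P0. lra. }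
  assert (Hab : a / b = u / v).
  { unfold u, v, al, be. field. repeat split; lra. }
  assert (HT0 : T <> 0) by lra.
  destruct (trig3 u v ltac:(unfold P in P0; lra) ltac:(unfold Q in Q0; lra))
    as [[j [l [Hu Hv]]]|[j [l [Hu Hv]]]].
  - exists j, (l - 1)%Z. right.
    assert (Hq : IZR (2 + 3 * (l - 1)) <> 0) by (apply not_0_IZR; lia).
    assert (Hu' : u = 2*PI/3 * IZR (1 + 3*j)) by (rewrite Hu, plus_IZR, mult_IZR; field).
    assert (Hv' : v = 2*PI/3 * IZR (2 + 3*(l-1))) by (rewrite Hv, plus_IZR, mult_IZR, minus_IZR; field).
    rewrite Hab, Hu', Hv'. field. split; lra.
  - exists l, (j - 1)%Z. left.
    assert (Hq : IZR (1 + 3 * l) <> 0) by (apply not_0_IZR; lia).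
    assert (Hu' : u = 2*PI/3 * IZR (2 + 3*(j-1))) by (rewrite Hu, plus_IZR, mult_IZR, minus_IZR; field).
    assert (Hv' : v = 2*PI/3 * IZR (1 + 3*l)) by (rewrite Hv, plus_IZR, mult_IZR; field).
    rewrite Hab, Hu', Hv'. field. split; lra.
Qed.

Lemma if_dir a b : 0 < b -> in_exceptional_set (a / b) -> has_nonzero_cont_periodic_sol a b.
Proof.
  intros Hb [m [k [Hr|Hr]]].
  - assert (Hp : IZR (1 + 3*m) <> 0) by (apply not_0_IZR; lia).
    apply (mk_sol a b (1 + 3*m) (2 + 3*k)); auto.
    + replace (b * IZR (2 + 3 * k) / IZR (1 + 3 * m)) with (b * (IZR (2 + 3 * k) / IZR (1 + 3 * m))) by (field; auto).
      rewrite <- Hr. field. lra.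
    + intros t. pose proof (cos3 t m k). lra.
  - assert (Hp : IZR (2 + 3*k) <> 0) by (apply not_0_IZR; lia).
    apply (mk_sol a b (2 + 3*k) (1 + 3*m)); auto.
    + replace (b * IZR (1 + 3 * m) / IZR (2 + 3 * k)) with (b * (IZR (1 + 3 * m) / IZR (2 + 3 * k))) by (field; auto).
      rewrite <- Hr. field. lra.
    + intros t. pose proof (cos3 t m k). lra.
Qed.

Theorem mainTheorem8 :
  (forall a b : R, 0 < b ->
     (has_nonzero_cont_periodic_sol a b <-> in_exceptional_set (a / b)))
  /\
  (forall a b : R, 0 < b -> ~ is_rational (a / b) ->
     ~ has_nonzero_cont_periodic_sol a b)
  /\
  (forall N : nat, exists p q : Z, (0 < q)%Z /\ INR N < IZR p / IZR q /\
     forall a b : R, 0 < b -> a / b = IZR p / IZR q ->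
       ~ has_nonzero_cont_periodic_sol a b).
Proof.
  split; [|split].
  - intros a b Hb; split; [apply only_if; auto|apply if_dir; auto].
  - intros a b Hb Hrat Hs. apply Hrat. destruct (only_if a b Hb Hs) as [m [k [Hr|Hr]]].
    + exists (2 + 3*k)%Z, (1 + 3*m)%Z; split; auto; lia.
    + exists (1 + 3*m)%Z, (2 + 3*k)%Z; split; auto; lia.
  - intros N. exists (3 * (Z.of_nat N + 1))%Z, 1%Z. split; [lia|split].
    + rewrite mult_IZR, plus_IZR, <- INR_IZR_INZ. pose proof (pos_INR N).
      replace (IZR 1) with 1 by reflexivity. lra.
    + intros a b Hb Hab Hs. destruct (only_if a b Hb Hs) as [m [k [Hr|Hr]]]; rewrite Hab in Hr.
      * assert (Hp : IZR (1 + 3*m) <> 0) by (apply not_0_IZR; lia).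
        assert (E : IZR (3 * (Z.of_nat N + 1)) * IZR (1 + 3*m) = IZR (2 + 3*k)).
        { replace (IZR (2 + 3*k)) with (IZR (2 + 3*k) / IZR (1 + 3*m) * IZR (1 + 3*m)) by (field; auto).
          rewrite <- Hr. replace (IZR 1) with 1 by reflexivity. field. }
        rewrite <- mult_IZR in E. apply eq_IZR in E. lia.
      * assert (Hp : IZR (2 + 3*k) <> 0) by (apply not_0_IZR; lia).
        assert (E : IZR (3 * (Z.of_nat N + 1)) * IZR (2 + 3*k) = IZR (1 + 3*m)).
        { replace (IZR (1 + 3*m)) with (IZR (1 + 3*m) / IZR (2 + 3*k) * IZR (2 + 3*k)) by (field; auto).
          rewrite <- Hr. replace (IZR 1) with 1 by reflexivity. field. }
        rewrite <- mult_IZR in E. apply eq_IZR in E. lia.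
Qed.
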